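(* If $b,c\ne 0$, then $\check{f}(x)$ has at most two roots. Furthermore, exactly one of the following statements is true. 1. $\check{f}$ has exactly two roots $x_0$ and $x_1$ at which it changes sign. The derivative $\check{f}'$ is nonzero at $x_0$ and $x_1$, and either $a<1,b<0,c>0$ or $a>1,b>0,c<0$. 2. $\check{f}$ has exactly one root $x_0$ at which it does not change sign. The derivative $\check{f}'$ also has a root at $x_0$, and either $a<1,b<0,c>0$ or $a>1,b>0,c<0$. 3. $\check{f}$ has exactly one root $x_0$ at which it changes sign. The derivative $\check{f}'$ is nonzero at $x_0$, and $bc>0$. 4. $\check{f}$ has no roots, and $bc<0$.
   Context: A function $f:\mathbb{R}^+\to\mathbb{R}^+$ is called strongly hyperbolic if: (1) $\lim_{x\to 0+} f(x)=+\infty$ and $\lim_{x\to+\infty} f(x)=0$; (2) $f$ is strictly convex; (3) for each $b\in\mathbb{R}$, $\lim_{x\to+\infty} f(x+b)/f(x)=1$; (4) $f$ is differentiable; (5) $\ln|f'(x)|$ is strictly convex. Let $f$ be a strongly hyperbolic function, let $a>0$, $b,c\in\mathbb{R}$, and define $\check{f}:(\max\{-b,0\},\infty)\to\mathbb{R}$ by $\check{f}(x)=af(x+b)+c-f(x)$. *)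

(* Defs.v *)
From Stdlib Require Import Reals.
From Coquelicot Require Import Coquelicot.
Open Scope R_scope.

Definition strictly_convex_pos (g : R -> R) : Prop :=
  forall x y t, 0 < x -> 0 < y -> x <> y -> 0 < t < 1 ->
    g (t * x + (1 - t) * y) < t * g x + (1 - t) * g y.

(* f : R^+ -> R^+ is strongly hyperbolic (values of f at x <= 0 are irrelevant) *)
Definition strongly_hyperbolic (f : R -> R) : Prop :=
  (forall x, 0 < x -> 0 < f x) /\
  filterlim f (at_right 0) (Rbar_locally p_infty) /\
  is_lim f p_infty 0 /\
  strictly_convex_pos f /\
  (forall b : R, is_lim (fun x => f (x + b) / f x) p_infty 1) /\
  (forall x, 0 < x -> ex_derive f x) /\
  strictly_convex_pos (fun x => ln (Rabs (Derive f x))).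

Definition fcheck (f : R -> R) (a b c : R) (x : R) : R :=
  a * f (x + b) + c - f x.

Definition in_dom (b x : R) : Prop := Rmax (- b) 0 < x.

Definition is_root (g : R -> R) (b x : R) : Prop := in_dom b x /\ g x = 0.

Definition changes_sign (g : R -> R) (x0 : R) : Prop :=
  exists d, 0 < d /\
    forall y z, x0 - d < y < x0 -> x0 < z < x0 + d -> g y * g z < 0.

Definition exactly_one4 (P1 P2 P3 P4 : Prop) : Prop :=
  (P1 /\ ~ P2 /\ ~ P3 /\ ~ P4) \/ (~ P1 /\ P2 /\ ~ P3 /\ ~ P4) \/
  (~ P1 /\ ~ P2 /\ P3 /\ ~ P4) \/ (~ P1 /\ ~ P2 /\ ~ P3 /\ P4).

(* Main.v *)
Require Import Defs.
From Stdlib Require Import Reals.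
From Coquelicot Require Import Coquelicot.
From Stdlib Require Import Lra Classical_Prop.
Open Scope R_scope.

Lemma lim_inf_ex (f : R -> R) : is_lim f p_infty 0 ->
  forall eps, 0 < eps -> exists M, forall x, M < x -> f x < eps.
Proof.
  intros H eps He. apply is_lim_spec in H.
  destruct (H (mkposreal eps He)) as [M HM]. exists M. intros x Hx.
  specialize (HM x Hx). simpl in HM. apply Rabs_def2 in HM. lra.
Qed.

Lemma near0_ex (f : R -> R) : filterlim f (at_right 0) (Rbar_locally p_infty) ->
  forall M, exists d, 0 < d /\ forall x, 0 < x < d -> M < f x.
Proof.
  intros H M.
  assert (HP : Rbar_locally p_infty (fun y => M < y)) by (exists M; auto).
  specialize (H _ HP). destruct H as [e He]. exists e. split. apply cond_pos.
  intros x Hx. apply He. 2: lra.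
  unfold ball; simpl; unfold AbsRing_ball, minus, plus, opp; simpl.
  rewrite Rabs_right; lra.
Qed.

Lemma f_decr (f : R -> R) : (forall x, 0 < x -> 0 < f x) -> strictly_convex_pos f ->
  is_lim f p_infty 0 -> forall x y, 0 < x -> x < y -> f y < f x.
Proof.
  intros fpos fconv finf x y Hx Hxy.
  destruct (Rlt_or_le (f y) (f x)) as [H|H]; [exact H|exfalso].
  assert (Hz : forall z, y < z -> f y < f z).
  { intros z Hz. set (t := (z - y) / (z - x)).
    assert (Ht : 0 < t < 1).
    { unfold t; split.
      - apply Rdiv_lt_0_compat; lra.
      - apply Rmult_lt_reg_r with (z - x). lra. field_simplify; lra. }
    assert (E : t * x + (1 - t) * z = y) by (unfold t; field; lra).
    pose proof (fconv x z t Hx ltac:(lra) ltac:(lra) Ht) as C. rewrite E in C.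
    nra. }
  destruct (lim_inf_ex f finf (f y) (fpos y ltac:(lra))) as [M HM].
  set (z := Rmax M y + 1).
  assert (M < z /\ y < z) by (unfold z; pose proof (Rmax_l M y); pose proof (Rmax_r M y); lra).
  specialize (HM z ltac:(lra)). specialize (Hz z ltac:(lra)). lra.
Qed.

Lemma fd_neg (f : R -> R) : (forall x, 0 < x -> 0 < f x) -> strictly_convex_pos f ->
  is_lim f p_infty 0 -> (forall x, 0 < x -> ex_derive f x) ->
  forall x, 0 < x -> Derive f x < 0.
Proof.
  intros fpos fconv finf fder x Hx.
  destruct (Rlt_or_le (Derive f x) 0) as [H|H]; [exact H|exfalso].
  pose proof (Derive_correct f x (fder x Hx)) as Hd.
  apply is_derive_Reals in Hd. set (l := Derive f x) in *.
  destruct (lim_inf_ex f finf (f x) (fpos x Hx)) as [M HM].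
  set (S := Rmax M x + 1 - x).
  assert (HS : 0 < S /\ M < x + S) by (unfold S; pose proof (Rmax_l M x); pose proof (Rmax_r M x); lra).
  specialize (HM (x + S) ltac:(lra)).
  set (Q := (f (x + S) - f x) / S).
  assert (EQ : f (x + S) - f x = Q * S) by (unfold Q; field; lra).
  assert (HQ : Q < 0) by nra.
  destruct (Hd (- Q) ltac:(lra)) as [del Hdel].
  set (h := Rmin (del / 2) (S / 2)).
  assert (Hh : 0 < h /\ h < del /\ h < S).
  { unfold h. pose proof (cond_pos del). pose proof (Rmin_l (del/2) (S/2)).
    pose proof (Rmin_r (del/2) (S/2)).
    pose proof (Rmin_glb_lt (del/2) (S/2) 0 ltac:(lra) ltac:(lra)). lra. }
  specialize (Hdel h ltac:(lra) ltac:(rewrite Rabs_right; lra)).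
  set (t := 1 - h / S).
  assert (Ht : 0 < t < 1).
  { unfold t. assert (0 < h / S < 1). split. apply Rdiv_lt_0_compat; lra.
    apply Rmult_lt_reg_r with S. lra. field_simplify; lra. lra. }
  assert (E : t * x + (1 - t) * (x + S) = x + h) by (unfold t; field; lra).
  pose proof (fconv x (x + S) t Hx ltac:(lra) ltac:(lra) Ht) as C. rewrite E in C.
  assert (C2 : f (x + h) - f x < h * Q).
  { replace (t * f x + (1 - t) * f (x + S)) with (f x + (h / S) * (Q * S)) in C
      by (rewrite <- EQ; unfold t; field; lra).
    replace (h / S * (Q * S)) with (h * Q) in C by (field; lra). lra. }
  set (N := f (x + h) - f x) in *.
  assert (EN : N / h * h = N) by (field; lra).
  apply Rabs_def2 in Hdel. nra.
Qed.

Lemma convex_shift (h : R -> R) : strictly_convex_pos h ->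
  forall x y be, 0 < x -> x < y -> 0 < be -> h (x + be) - h x < h (y + be) - h y.
Proof.
  intros H x y be Hx Hxy Hb.
  set (t := (y - x) / (y - x + be)).
  assert (Ht : 0 < t < 1).
  { unfold t; split. apply Rdiv_lt_0_compat; lra.
    apply Rmult_lt_reg_r with (y - x + be). lra. field_simplify; lra. }
  pose proof (H x (y + be) t Hx ltac:(lra) ltac:(lra) Ht) as C1.
  pose proof (H x (y + be) (1 - t) Hx ltac:(lra) ltac:(lra) ltac:(lra)) as C2.
  replace (t * x + (1 - t) * (y + be)) with (x + be) in C1 by (unfold t; field; lra).
  replace ((1 - t) * x + (1 - (1 - t)) * (y + be)) with y in C2 by (unfold t; field; lra).
  lra.
Qed.

Section Abs.
Variables (G DG : R -> R) (L : R).
Hypothesis HD : forall x, L < x -> is_derive G x (DG x).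
Hypothesis HK : forall x y, L < x -> x < y -> ~ (DG x <= 0 /\ DG y >= 0).
Hypothesis H3 : forall y, L < y -> exists p, L < p < y /\ G p < 0.

Lemma A_cont x : L < x -> continuity_pt G x.
Proof.
  intros Hx. apply continuity_pt_filterlim. apply (@ex_derive_continuous R_AbsRing R_NormedModule).
  exists (DG x). apply HD; exact Hx.
Qed.

Lemma A_mvt u v : L < u -> u < v -> exists c, u <= c <= v /\ G v - G u = DG c * (v - u).
Proof.
  intros Hu Huv.
  destruct (MVT_gen G u v DG) as [c [Hc E]].
  - intros x Hx. apply HD. rewrite Rmin_left in Hx; lra.
  - intros x Hx. apply A_cont. rewrite Rmin_left in Hx; lra.
  - exists c. rewrite Rmin_left in Hc by lra. rewrite Rmax_right in Hc by lra. auto.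
Qed.

Lemma A_mono1 u v : L < u -> u < v -> DG v >= 0 -> G u < G v.
Proof.
  intros Hu Huv Hv.
  assert (P : forall x, L < x -> x < v -> DG x > 0).
  { intros x Hx Hxv. destruct (Rle_lt_dec (DG x) 0) as [H|H]; [|lra].
    exfalso. apply (HK x v Hx Hxv). auto. }
  set (m := (u + v) / 2).
  destruct (A_mvt u m Hu ltac:(unfold m; lra)) as [c1 [Hc1 E1]].
  destruct (A_mvt m v ltac:(unfold m; lra) ltac:(unfold m; lra)) as [c2 [Hc2 E2]].
  assert (DG c1 > 0) by (apply P; unfold m in *; lra).
  assert (DG c2 >= 0).
  { destruct (Req_dec c2 v) as [->|Hn]; [lra|]. left. apply P; unfold m in *; lra. }
  unfold m in *. nra.
Qed.

Lemma A_mono2 u v : L < u -> u < v -> DG u <= 0 -> G v < G u.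
Proof.
  intros Hu Huv Hv.
  assert (P : forall x, u < x -> DG x < 0).
  { intros x Hx. destruct (Rle_lt_dec 0 (DG x)) as [H|H]; [|lra].
    exfalso. apply (HK u x Hu Hx). split; lra. }
  set (m := (u + v) / 2).
  destruct (A_mvt u m Hu ltac:(unfold m; lra)) as [c1 [Hc1 E1]].
  destruct (A_mvt m v ltac:(unfold m; lra) ltac:(unfold m; lra)) as [c2 [Hc2 E2]].
  assert (DG c2 < 0) by (apply P; unfold m in *; lra).
  assert (DG c1 <= 0).
  { destruct (Req_dec c1 u) as [->|Hn]; [lra|]. left. apply P; unfold m in *; lra. }
  unfold m in *. nra.
Qed.

Lemma A_qc u v w : L < u -> u < v -> v < w -> G v <= G u -> G v <= G w -> False.
Proof.
  intros Hu Huv Hvw H1 H2.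
  destruct (Rle_lt_dec 0 (DG v)) as [H|H].
  - pose proof (A_mono1 u v Hu Huv ltac:(lra)). lra.
  - pose proof (A_mono2 v w ltac:(lra) Hvw ltac:(lra)). lra.
Qed.

Lemma A_two x y z : L < x -> G x = 0 -> L < y -> G y = 0 -> L < z -> G z = 0 ->
  x = y \/ x = z \/ y = z.
Proof.
  intros Hx Gx Hy Gy Hz Gz.
  assert (K : forall u v w, L < u -> G u = 0 -> G v = 0 -> G w = 0 -> u < v -> v < w -> False).
  { intros u v w Hu Gu Gv Gw H1 H2. apply (A_qc u v w); lra. }
  destruct (Req_dec x y) as [|N1]; auto. destruct (Req_dec x z) as [|N2]; auto.
  destruct (Req_dec y z) as [|N3]; auto.
  exfalso.
  destruct (Rdichotomy _ _ N1); destruct (Rdichotomy _ _ N2); destruct (Rdichotomy _ _ N3).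
  all: first [ (apply (K x y z); auto; lra) | (apply (K x z y); auto; lra)
             | (apply (K y x z); auto; lra) | (apply (K y z x); auto; lra)
             | (apply (K z x y); auto; lra) | (apply (K z y x); auto; lra) | lra ].
Qed.

Lemma A_ivt p q : L < p -> p < q -> G p * G q < 0 -> exists r, p < r < q /\ G r = 0.
Proof.
  intros Hp Hpq Hs.
  assert (Hc : forall x : R, Rbar_lt p x -> Rbar_lt x q -> continuity_pt G x).
  { intros x H1 H2. change (p < x) in H1. apply A_cont. lra. }
  assert (Lp := is_lim_continuity G p (A_cont p Hp)).
  assert (Lq := is_lim_continuity G q (A_cont q ltac:(lra))).
  destruct (Rlt_or_le (G p) 0) as [Hn|Hn].
  - assert (0 < G q) by nra.
    destruct (IVT_Rbar_incr G p q (G p) (G q) 0 Lp Lq Hc ltac:(simpl; lra) ltac:(simpl; lra))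
      as [r [H1 [H2 H4]]]. exists r. simpl in *. auto.
  - assert (0 < G p).
    { destruct (Req_dec (G p) 0) as [E|E]; [rewrite E in Hs; lra | lra]. }
    assert (G q < 0) by nra.
    destruct (IVT_Rbar_decr G p q (G p) (G q) 0 Lp Lq Hc ltac:(simpl; lra) ltac:(simpl; lra))
      as [r [H1 [H2 H4]]]. exists r. simpl in *. auto.
Qed.


Lemma loc_pos x l d : is_derive G x l -> 0 < l -> 0 < d -> exists z, x < z < x + d /\ G x < G z.
Proof.
  intros H Hl Hd. apply is_derive_Reals in H.
  destruct (H l Hl) as [del Hdel].
  set (h := Rmin (d / 2) (del / 2)).
  assert (Hh : 0 < h /\ h < d /\ h < del).
  { unfold h. pose proof (cond_pos del). pose proof (Rmin_l (d/2) (del/2)).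
    pose proof (Rmin_r (d/2) (del/2)).
    pose proof (Rmin_glb_lt (d/2) (del/2) 0 ltac:(lra) ltac:(lra)). lra. }
  specialize (Hdel h ltac:(lra) ltac:(rewrite Rabs_right; lra)).
  apply Rabs_def2 in Hdel.
  set (N := G (x + h) - G x) in *.
  assert (EN : N / h * h = N) by (field; lra).
  assert (N > 0) by (rewrite <- EN; apply Rmult_lt_0_compat; lra).
  exists (x + h). split. lra. unfold N in *; lra.
Qed.

Lemma loc_neg x l d : is_derive G x l -> l < 0 -> 0 < d -> exists y, x - d < y < x /\ G x < G y.
Proof.
  intros H Hl Hd. apply is_derive_Reals in H.
  destruct (H (- l) ltac:(lra)) as [del Hdel].
  set (h := Rmin (d / 2) (del / 2)).
  assert (Hh : 0 < h /\ h < d /\ h < del).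
  { unfold h. pose proof (cond_pos del). pose proof (Rmin_l (d/2) (del/2)).
    pose proof (Rmin_r (d/2) (del/2)).
    pose proof (Rmin_glb_lt (d/2) (del/2) 0 ltac:(lra) ltac:(lra)). lra. }
  specialize (Hdel (- h) ltac:(lra) ltac:(rewrite Rabs_left; lra)).
  apply Rabs_def2 in Hdel.
  set (N := G (x + - h) - G x) in *.
  assert (EN : N / (- h) * (- h) = N) by (field; lra).
  assert (N > 0).
  { rewrite <- EN. replace (N / - h * - h) with ((- (N / - h)) * h) by ring.
    apply Rmult_lt_0_compat; lra. }
  exists (x + - h). split. lra. unfold N in *; lra.
Qed.

Definition rootG x := L < x /\ G x = 0.

Lemma left_neg x0 : rootG x0 -> (forall x, rootG x -> x = x0) ->
  forall y, L < y -> y < x0 -> G y < 0.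
Proof.
  intros [H0 G0] U y Hy Hyx.
  destruct (H3 y Hy) as [p [Hp Gp]].
  destruct (Rlt_or_le (G y) 0) as [H|H]; [exact H|exfalso].
  destruct (Req_dec (G y) 0) as [E|E].
  - specialize (U y (conj Hy E)). lra.
  - assert (0 < G y) by (destruct H as [H|H]; [exact H| symmetry in H; contradiction]).
    destruct (A_ivt p y ltac:(lra) ltac:(lra) ltac:(nra)) as [r [Hr Gr]].
    specialize (U r ltac:(split; [lra|exact Gr])). lra.
Qed.

Lemma left_neg2 u w : rootG u -> rootG w -> u < w -> (forall x, rootG x -> x = u \/ x = w) ->
  forall y, L < y -> y < u -> G y < 0.
Proof.
  intros [H0 G0] Hw Huw U y Hy Hyx.
  destruct (H3 y Hy) as [p [Hp Gp]].
  destruct (Rlt_or_le (G y) 0) as [H|H]; [exact H|exfalso].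
  destruct (Req_dec (G y) 0) as [E|E].
  - specialize (U y (conj Hy E)). lra.
  - assert (0 < G y) by (destruct H as [H|H]; [exact H| symmetry in H; contradiction]).
    destruct (A_ivt p y ltac:(lra) ltac:(lra) ltac:(nra)) as [r [Hr Gr]].
    specialize (U r ltac:(split; [lra|exact Gr])). lra.
Qed.

Lemma right_sign x0 (s : R) : rootG x0 -> (forall x, rootG x -> x <= x0) ->
  (forall z, exists q, z < q /\ s * G q > 0) ->
  forall z, x0 < z -> s * G z > 0.
Proof.
  intros [H0 G0] U Hf z Hz.
  destruct (Hf z) as [q [Hq Gq]].
  destruct (Rlt_or_le 0 (s * G z)) as [H|H]; [exact H|exfalso].
  destruct (Req_dec (G z) 0) as [E|E].
  - specialize (U z ltac:(split; [lra|exact E])). lra.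
  - assert (s * G z < 0).
    { destruct (Req_dec (s * G z) 0) as [E2|E2]; [|lra].
      apply Rmult_integral in E2. destruct E2 as [E2|E2]; [|tauto].
      rewrite E2 in Gq. lra. }
    destruct (A_ivt z q ltac:(lra) ltac:(lra) ltac:(nra)) as [r [Hr Gr]].
    specialize (U r ltac:(split; [lra|exact Gr])). lra.
Qed.

Lemma A_pos : (forall z, exists q, z < q /\ G q > 0) ->
  exists x0, rootG x0 /\ (forall x, rootG x -> x = x0) /\ changes_sign G x0 /\ DG x0 <> 0.
Proof.
  intros Hf.
  destruct (H3 (L + 1) ltac:(lra)) as [p [Hp Gp]].
  destruct (Hf p) as [q [Hq Gq]].
  destruct (A_ivt p q ltac:(lra) Hq ltac:(nra)) as [x0 [Hx0 G0]].
  assert (R0 : rootG x0) by (split; [lra|exact G0]).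
  assert (U : forall x, rootG x -> x = x0).
  { assert (K : forall u w, rootG u -> rootG w -> u < w -> False).
    { intros u w [Hu Gu] [Hw Gw] Huw. destruct (Hf w) as [q' [Hq' Gq']].
      apply (A_qc u w q'); lra. }
    intros x Rx. destruct (Req_dec x x0) as [|N]; auto.
    exfalso. destruct (Rdichotomy _ _ N); [apply (K x x0) | apply (K x0 x)]; auto. }
  assert (Hr : forall z, x0 < z -> 1 * G z > 0).
  { apply (right_sign x0 1 R0). intros x Rx. rewrite (U x Rx). lra.
    intros z. destruct (Hf z) as [q' H]. exists q'. lra. }
  assert (Hl := left_neg x0 R0 U).
  exists x0. split; [exact R0|]. split; [exact U|]. split.
  - exists (x0 - L). split. lra. intros y z Hy Hz.
    specialize (Hl y ltac:(lra) ltac:(lra)). specialize (Hr z ltac:(lra)). nra.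
  - intros E. pose proof (A_mono2 x0 (x0 + 1) (proj1 R0) ltac:(lra) ltac:(lra)).
    specialize (Hr (x0 + 1) ltac:(lra)). lra.
Qed.

Lemma two_case u w : (forall z, exists q, z < q /\ G q < 0) -> rootG u -> rootG w -> u < w ->
  (forall x, rootG x -> x = u \/ x = w) /\ changes_sign G u /\ changes_sign G w /\ DG u <> 0 /\ DG w <> 0.
Proof.
  intros Hf Ru Rw Huw.
  assert (U : forall x, rootG x -> x = u \/ x = w).
  { intros x Rx. destruct Ru as [Hu Gu]. destruct Rw as [Hw Gw]. destruct Rx as [Hx Gx].
    destruct (A_two x u w Hx Gx Hu Gu Hw Gw) as [E|[E|E]]; auto. lra. }
  assert (Hl := left_neg2 u w Ru Rw Huw U).
  assert (Hm : forall y, u < y -> y < w -> G y > 0).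
  { intros y H1 H2. destruct (Rlt_or_le 0 (G y)) as [H|H]; [lra|exfalso].
    destruct Ru as [Hu Gu]. destruct Rw as [Hw Gw]. apply (A_qc u y w); lra. }
  assert (Hr : forall z, w < z -> -1 * G z > 0).
  { apply (right_sign w (-1) Rw).
    intros x Rx. destruct (U x Rx) as [->| ->]; lra.
    intros z. destruct (Hf z) as [q' H]. exists q'. lra. }
  destruct Ru as [Hu Gu]. destruct Rw as [Hw Gw].
  split; [exact U|]. split; [|split; [|split]].
  - exists (Rmin (u - L) (w - u)).
    pose proof (Rmin_l (u - L) (w - u)). pose proof (Rmin_r (u - L) (w - u)).
    pose proof (Rmin_glb_lt (u - L) (w - u) 0 ltac:(lra) ltac:(lra)).
    split. lra. intros y z Hy Hz.
    specialize (Hl y ltac:(lra) ltac:(lra)). specialize (Hm z ltac:(lra) ltac:(lra)). nra.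
  - exists (w - u). split. lra. intros y z Hy Hz.
    specialize (Hm y ltac:(lra) ltac:(lra)). specialize (Hr z ltac:(lra)). nra.
  - intros E. pose proof (A_mono2 u ((u + w) / 2) Hu ltac:(lra) ltac:(lra)).
    specialize (Hm ((u + w) / 2) ltac:(lra) ltac:(lra)). lra.
  - intros E. pose proof (A_mono1 ((u + w) / 2) w ltac:(lra) ltac:(lra) ltac:(lra)).
    specialize (Hm ((u + w) / 2) ltac:(lra) ltac:(lra)). lra.
Qed.

Lemma A_neg : (forall z, exists q, z < q /\ G q < 0) ->
  (exists x0 x1, x0 < x1 /\ rootG x0 /\ rootG x1 /\ (forall x, rootG x -> x = x0 \/ x = x1) /\
     changes_sign G x0 /\ changes_sign G x1 /\ DG x0 <> 0 /\ DG x1 <> 0)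
  \/ (exists x0, rootG x0 /\ (forall x, rootG x -> x = x0) /\ ~ changes_sign G x0 /\ DG x0 = 0)
  \/ (forall x, ~ rootG x).
Proof.
  intros Hf.
  destruct (Classical_Prop.classic (exists x, rootG x)) as [[x0 R0]|N0].
  2: { right; right. intros x Rx. apply N0. exists x. exact Rx. }
  destruct (Classical_Prop.classic (exists x1, rootG x1 /\ x1 <> x0)) as [[x1 [R1 N]]|N1].
  - left. destruct (Rdichotomy _ _ N) as [H|H].
    + exists x1, x0. split; [exact H|]. split; [exact R1|]. split; [exact R0|].
      exact (two_case x1 x0 Hf R1 R0 H).
    + exists x0, x1. split; [exact H|]. split; [exact R0|]. split; [exact R1|].
      exact (two_case x0 x1 Hf R0 R1 H).
  - right; left.
    assert (U : forall x, rootG x -> x = x0).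
    { intros x Rx. destruct (Req_dec x x0) as [|E]; auto. exfalso. apply N1. exists x. auto. }
    assert (Hl := left_neg x0 R0 U).
    assert (Hr : forall z, x0 < z -> -1 * G z > 0).
    { apply (right_sign x0 (-1) R0).
      intros x Rx. rewrite (U x Rx). lra.
      intros z. destruct (Hf z) as [q' H]. exists q'. lra. }
    destruct R0 as [H0 G0].
    exists x0. split; [split; auto|]. split; [exact U|]. split.
    + intros [d [Hd Hs]].
      pose proof (Rmin_l d (x0 - L)). pose proof (Rmin_r d (x0 - L)).
      pose proof (Rmin_glb_lt d (x0 - L) 0 ltac:(lra) ltac:(lra)).
      set (y := x0 - Rmin d (x0 - L) / 2).
      specialize (Hs y (x0 + d / 2) ltac:(unfold y; lra) ltac:(lra)).
      specialize (Hl y ltac:(unfold y; lra) ltac:(unfold y; lra)).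
      specialize (Hr (x0 + d / 2) ltac:(lra)). nra.
    + destruct (total_order_T (DG x0) 0) as [[H|H]|H]; auto; exfalso.
      * destruct (loc_neg x0 (DG x0) (x0 - L) (HD x0 H0) H ltac:(lra)) as [y [Hy Gy]].
        specialize (Hl y ltac:(lra) ltac:(lra)). lra.
      * destruct (loc_pos x0 (DG x0) 1 (HD x0 H0) H ltac:(lra)) as [z [Hz Gz]].
        specialize (Hr z ltac:(lra)). lra.
Qed.

End Abs.

Definition C1 (g : R -> R) (a b c : R) : Prop :=
    (exists x0 x1, x0 <> x1 /\ is_root g b x0 /\ is_root g b x1 /\
       (forall x, is_root g b x -> x = x0 \/ x = x1) /\
       changes_sign g x0 /\ changes_sign g x1 /\
       Derive g x0 <> 0 /\ Derive g x1 <> 0 /\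
       ((a < 1 /\ b < 0 /\ c > 0) \/ (a > 1 /\ b > 0 /\ c < 0))).
Definition C2 (g : R -> R) (a b c : R) : Prop :=
    (exists x0, is_root g b x0 /\ (forall x, is_root g b x -> x = x0) /\
       ~ changes_sign g x0 /\ Derive g x0 = 0 /\
       ((a < 1 /\ b < 0 /\ c > 0) \/ (a > 1 /\ b > 0 /\ c < 0))).
Definition C3 (g : R -> R) (a b c : R) : Prop :=
    (exists x0, is_root g b x0 /\ (forall x, is_root g b x -> x = x0) /\
       changes_sign g x0 /\ Derive g x0 <> 0 /\ b * c > 0).
Definition C4 (g : R -> R) (a b c : R) : Prop :=
    ((forall x, ~ is_root g b x) /\ b * c < 0).

Lemma n1 g a b c : (exists x0, is_root g b x0 /\ (forall x, is_root g b x -> x = x0)) -> ~ C1 g a b c.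
Proof.
  intros [y [Ry Uy]] [x0 [x1 [N [R0 [R1 _]]]]]. apply N.
  rewrite (Uy x0 R0), (Uy x1 R1). reflexivity.
Qed.

Lemma n4 g a b c : (exists x0, is_root g b x0) -> ~ C4 g a b c.
Proof. intros [y Ry] [Nr _]. apply (Nr y Ry). Qed.

Lemma excl1 g a b c : C1 g a b c -> exactly_one4 (C1 g a b c) (C2 g a b c) (C3 g a b c) (C4 g a b c).
Proof.
  intros H. left. split; [exact H|]. split; [|split].
  - intros [y [Ry [Uy _]]]. apply (n1 g a b c); eauto.
  - intros [y [Ry [Uy _]]]. apply (n1 g a b c); eauto.
  - destruct H as [x0 [x1 [_ [R0 _]]]]. apply n4; eauto.
Qed.

Lemma excl2 g a b c : C2 g a b c -> exactly_one4 (C1 g a b c) (C2 g a b c) (C3 g a b c) (C4 g a b c).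
Proof.
  intros H. right; left. destruct H as [x0 [R0 [U0 [NC0 R]]]].
  split; [|split; [|split]].
  - apply (n1 g a b c); eauto.
  - exists x0; auto.
  - intros [y [Ry [Uy [Cy _]]]]. rewrite (U0 y Ry) in Cy. auto.
  - apply n4; eauto.
Qed.

Lemma excl3 g a b c : C3 g a b c -> exactly_one4 (C1 g a b c) (C2 g a b c) (C3 g a b c) (C4 g a b c).
Proof.
  intros H. right; right; left. destruct H as [x0 [R0 [U0 [C0 R]]]].
  split; [|split; [|split]].
  - apply (n1 g a b c); eauto.
  - intros [y [Ry [Uy [NCy _]]]]. rewrite (U0 y Ry) in NCy. auto.
  - exists x0; auto.
  - apply n4; eauto.
Qed.

Lemma excl4 g a b c : C4 g a b c -> exactly_one4 (C1 g a b c) (C2 g a b c) (C3 g a b c) (C4 g a b c).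
Proof.
  intros H. right; right; right. destruct H as [Nr Hbc].
  split; [|split; [|split]].
  - intros [x0 [x1 [_ [R0 _]]]]. apply (Nr x0 R0).
  - intros [x0 [R0 _]]. apply (Nr x0 R0).
  - intros [x0 [R0 _]]. apply (Nr x0 R0).
  - split; auto.
Qed.

Theorem lemma3p5 (f : R -> R) (a b c : R) :
  strongly_hyperbolic f -> 0 < a -> b <> 0 -> c <> 0 ->
  let g := fcheck f a b c in
  (* at most two roots *)
  (forall x y z, is_root g b x -> is_root g b y -> is_root g b z ->
     x = y \/ x = z \/ y = z) /\
  exactly_one4
    (* 1. *)
    (exists x0 x1, x0 <> x1 /\ is_root g b x0 /\ is_root g b x1 /\
       (forall x, is_root g b x -> x = x0 \/ x = x1) /\
       changes_sign g x0 /\ changes_sign g x1 /\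
       Derive g x0 <> 0 /\ Derive g x1 <> 0 /\
       ((a < 1 /\ b < 0 /\ c > 0) \/ (a > 1 /\ b > 0 /\ c < 0)))
    (* 2. *)
    (exists x0, is_root g b x0 /\ (forall x, is_root g b x -> x = x0) /\
       ~ changes_sign g x0 /\ Derive g x0 = 0 /\
       ((a < 1 /\ b < 0 /\ c > 0) \/ (a > 1 /\ b > 0 /\ c < 0)))
    (* 3. *)
    (exists x0, is_root g b x0 /\ (forall x, is_root g b x -> x = x0) /\
       changes_sign g x0 /\ Derive g x0 <> 0 /\ b * c > 0)
    (* 4. *)
    ((forall x, ~ is_root g b x) /\ b * c < 0).
Proof.
  intros Hf Ha Hb Hc g.
  destruct Hf as [fpos [f0 [finf [fconv [_ [fder hconv]]]]]].
  set (L := Rmax (-b) 0).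
  assert (HL1 : -b <= L) by apply Rmax_l. assert (HL2 : 0 <= L) by apply Rmax_r.
  assert (Fd := fd_neg f fpos fconv finf fder).
  assert (Fdec := f_decr f fpos fconv finf).
  assert (gder : forall x, L < x -> is_derive g x (a * Derive f (x + b) - Derive f x)).
  { intros x Hx. unfold g, fcheck. auto_derive.
    split; [apply fder; lra | split; [apply fder; lra | auto]].
    change (fun x0 : R => f x0) with f. ring. }
  assert (gD : forall x, L < x -> Derive g x = a * Derive f (x + b) - Derive f x)
    by (intros; apply is_derive_unique; auto).
  assert (gDc : forall x, L < x -> is_derive g x (Derive g x))
    by (intros x Hx; rewrite (gD x Hx); auto).
  assert (hl : forall x, 0 < x -> ln (Rabs (Derive f x)) = ln (- Derive f x))
    by (intros x Hx; rewrite Rabs_left; auto).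
  assert (Hsh := convex_shift _ hconv).
  assert (logle : forall u v, 0 < u -> 0 < v -> u <= a * v -> ln u <= ln a + ln v).
  { intros u v Hu Hv H. rewrite <- ln_mult by lra. apply ln_le; lra. }
  assert (logge : forall u v, 0 < u -> 0 < v -> a * v <= u -> ln a + ln v <= ln u).
  { intros u v Hu Hv H. rewrite <- ln_mult by lra. apply ln_le; nra. }
  assert (farP : c > 0 -> forall z, exists q, z < q /\ g q > 0).
  { intros cpos z. destruct (lim_inf_ex f finf c cpos) as [M HM].
    set (q := Rmax z (Rmax M (Rmax 0 (-b))) + 1).
    pose proof (Rmax_l z (Rmax M (Rmax 0 (-b)))). pose proof (Rmax_r z (Rmax M (Rmax 0 (-b)))).
    pose proof (Rmax_l M (Rmax 0 (-b))). pose proof (Rmax_r M (Rmax 0 (-b))).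
    pose proof (Rmax_l 0 (-b)). pose proof (Rmax_r 0 (-b)).
    exists q. split. unfold q; lra.
    specialize (HM q ltac:(unfold q; lra)). pose proof (fpos (q + b) ltac:(unfold q; lra)).
    unfold g, fcheck. nra. }
  assert (farN : c < 0 -> forall z, exists q, z < q /\ g q < 0).
  { intros cneg z. destruct (lim_inf_ex f finf (- c / a) ltac:(apply Rdiv_lt_0_compat; lra)) as [M HM].
    set (q := Rmax z (Rmax (M - b) (Rmax 0 (-b))) + 1).
    pose proof (Rmax_l z (Rmax (M - b) (Rmax 0 (-b)))). pose proof (Rmax_r z (Rmax (M - b) (Rmax 0 (-b)))).
    pose proof (Rmax_l (M - b) (Rmax 0 (-b))). pose proof (Rmax_r (M - b) (Rmax 0 (-b))).
    pose proof (Rmax_l 0 (-b)). pose proof (Rmax_r 0 (-b)).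
    exists q. split. unfold q; lra.
    specialize (HM (q + b) ltac:(unfold q; lra)). pose proof (fpos q ltac:(unfold q; lra)).
    assert (E : a * (- c / a) = - c) by (field; lra).
    unfold g, fcheck. nra. }
  destruct (Rdichotomy b 0 Hb) as [bneg|bpos].
  -
    assert (EL : L = - b) by (unfold L; apply Rmax_left; lra).
    set (G := fun x => - g x). set (DG := fun x => - Derive g x).
    assert (HD : forall x, L < x -> is_derive G x (DG x))
      by (intros x Hx; unfold G, DG; exact (@is_derive_opp R_AbsRing R_NormedModule g x _ (gDc x Hx))).
    assert (HK : forall x y, L < x -> x < y -> ~ (DG x <= 0 /\ DG y >= 0)).
    { intros x y Hx Hxy [H1 H2]. unfold DG in H1, H2.
      rewrite (gD x Hx) in H1. rewrite (gD y ltac:(lra)) in H2.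
      pose proof (Fd x ltac:(lra)). pose proof (Fd (x + b) ltac:(lra)).
      pose proof (Fd y ltac:(lra)). pose proof (Fd (y + b) ltac:(lra)).
      pose proof (logge (- Derive f x) (- Derive f (x + b)) ltac:(lra) ltac:(lra) ltac:(lra)).
      pose proof (logle (- Derive f y) (- Derive f (y + b)) ltac:(lra) ltac:(lra) ltac:(lra)).
      pose proof (Hsh (x + b) (y + b) (- b) ltac:(lra) ltac:(lra) ltac:(lra)) as S.
      replace (x + b + - b) with x in S by ring. replace (y + b + - b) with y in S by ring.
      cbv beta in S. rewrite !hl in S by lra. lra. }
    assert (H3 : forall y, L < y -> exists p, L < p < y /\ G p < 0).
    { intros y Hy. destruct (near0_ex f f0 ((f (- b) - c) / a)) as [d [Hd Hn]].
      set (p := - b + Rmin (y + b) d / 2).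
      pose proof (Rmin_l (y + b) d). pose proof (Rmin_r (y + b) d).
      pose proof (Rmin_glb_lt (y + b) d 0 ltac:(lra) ltac:(lra)).
      exists p. split. unfold p; lra.
      specialize (Hn (p + b) ltac:(unfold p; lra)).
      pose proof (Fdec (- b) p ltac:(lra) ltac:(unfold p; lra)).
      assert (E : a * ((f (- b) - c) / a) = f (- b) - c) by (field; lra).
      unfold G, g, fcheck. nra. }
    assert (RE : forall x, rootG G L x <-> is_root g b x).
    { intros x. unfold rootG, is_root, in_dom, G. fold L. split; intros [H1 H2]; split; lra. }
    assert (CE : forall x, changes_sign G x <-> changes_sign g x).
    { intros x. unfold changes_sign, G. split; intros [d [Hd Hs]]; exists d; split; auto;
      intros y z Hy Hz; specialize (Hs y z Hy Hz); lra. }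
    split.
    { intros x y z Rx Ry Rz. apply RE in Rx, Ry, Rz.
      destruct Rx, Ry, Rz. apply (A_two G DG L HD HK); auto. }
    destruct (Rdichotomy c 0 Hc) as [cneg|cpos].
    + apply (excl3 g a b c).
      destruct (A_pos G DG L HD HK H3) as [x0 [R0 [U0 [C0 D0]]]].
      { intros z. destruct (farN cneg z) as [q [Hq Gq]]. exists q. unfold G; lra. }
      exists x0. split; [apply RE; auto|]. split.
      { intros x Rx. apply U0. apply RE. auto. }
      split; [apply CE; auto|]. split; [unfold DG in D0; lra|]. nra.
    +
      assert (Hnr : 1 <= a -> forall x, ~ is_root g b x).
      { intros Ha1 x [Hx Gx]. unfold in_dom in Hx. fold L in Hx.
        pose proof (Fdec (x + b) x ltac:(lra) ltac:(lra)).
        pose proof (fpos (x + b) ltac:(lra)). unfold g, fcheck in Gx. nra. }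
      destruct (A_neg G DG L HD HK H3) as [[x0 [x1 [Hlt [R0 [R1 [U [C0 [C1' [D0 D1]]]]]]]]]|[[x0 [R0 [U0 [NC0 D0]]]]|Nr]].
      { intros z. destruct (farP cpos z) as [q [Hq Gq]]. exists q. unfold G; lra. }
      * apply (excl1 g a b c).
        assert (a < 1).
        { destruct (Rlt_or_le a 1) as [H|H]; auto. exfalso. apply (Hnr H x0). apply RE; auto. }
        exists x0, x1. split; [lra|]. split; [apply RE; auto|]. split; [apply RE; auto|].
        split. { intros x Rx. apply U. apply RE; auto. }
        split; [apply CE; auto|]. split; [apply CE; auto|].
        unfold DG in D0, D1. split; [lra|]. split; [lra|]. left; auto.
      * apply (excl2 g a b c).
        assert (a < 1).
        { destruct (Rlt_or_le a 1) as [H|H]; auto. exfalso. apply (Hnr H x0). apply RE; auto. }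
        exists x0. split; [apply RE; auto|]. split.
        { intros x Rx. apply U0. apply RE; auto. }
        split. { intros C. apply NC0. apply CE. auto. }
        unfold DG in D0. split; [lra|]. left; auto.
      * apply (excl4 g a b c). split.
        { intros x Rx. apply (Nr x). apply RE; auto. }
        nra.
  -
    assert (EL : L = 0) by (unfold L; apply Rmax_right; lra).
    set (DG := fun x => Derive g x).
    assert (HD : forall x, L < x -> is_derive g x (DG x)) by (intros; unfold DG; auto).
    assert (HK : forall x y, L < x -> x < y -> ~ (DG x <= 0 /\ DG y >= 0)).
    { intros x y Hx Hxy [H1 H2]. unfold DG in H1, H2.
      rewrite (gD x Hx) in H1. rewrite (gD y ltac:(lra)) in H2.
      pose proof (Fd x ltac:(lra)). pose proof (Fd (x + b) ltac:(lra)).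
      pose proof (Fd y ltac:(lra)). pose proof (Fd (y + b) ltac:(lra)).
      pose proof (logle (- Derive f x) (- Derive f (x + b)) ltac:(lra) ltac:(lra) ltac:(lra)).
      pose proof (logge (- Derive f y) (- Derive f (y + b)) ltac:(lra) ltac:(lra) ltac:(lra)).
      pose proof (Hsh x y b ltac:(lra) ltac:(lra) ltac:(lra)) as S.
      cbv beta in S. rewrite !hl in S by lra. lra. }
    assert (H3 : forall y, L < y -> exists p, L < p < y /\ g p < 0).
    { intros y Hy. destruct (near0_ex f f0 (a * f b + c)) as [d [Hd Hn]].
      set (p := Rmin y d / 2).
      pose proof (Rmin_l y d). pose proof (Rmin_r y d).
      pose proof (Rmin_glb_lt y d 0 ltac:(lra) ltac:(lra)).
      exists p. split. unfold p; lra.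
      specialize (Hn p ltac:(unfold p; lra)).
      pose proof (Fdec b (p + b) ltac:(lra) ltac:(unfold p; lra)).
      unfold g, fcheck. nra. }
    assert (RE : forall x, rootG g L x <-> is_root g b x).
    { intros x. unfold rootG, is_root, in_dom. fold L. tauto. }
    split.
    { intros x y z Rx Ry Rz. apply RE in Rx, Ry, Rz.
      destruct Rx, Ry, Rz. apply (A_two g DG L HD HK); auto. }
    destruct (Rdichotomy c 0 Hc) as [cneg|cpos].
    +
      assert (Hnr : a <= 1 -> forall x, ~ is_root g b x).
      { intros Ha1 x [Hx Gx]. unfold in_dom in Hx. fold L in Hx.
        pose proof (Fdec x (x + b) ltac:(lra) ltac:(lra)).
        pose proof (fpos (x + b) ltac:(lra)). unfold g, fcheck in Gx. nra. }
      destruct (A_neg g DG L HD HK H3) as [[x0 [x1 [Hlt [R0 [R1 [U [C0 [C1' [D0 D1]]]]]]]]]|[[x0 [R0 [U0 [NC0 D0]]]]|Nr]].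
      { exact (farN cneg). }
      * apply (excl1 g a b c).
        assert (a > 1).
        { destruct (Rlt_or_le 1 a) as [H|H]; auto. exfalso. apply (Hnr H x0). apply RE; auto. }
        exists x0, x1. split; [lra|]. split; [apply RE; auto|]. split; [apply RE; auto|].
        split. { intros x Rx. apply U. apply RE; auto. }
        split; [auto|]. split; [auto|].
        unfold DG in D0, D1. split; [lra|]. split; [lra|]. right; auto.
      * apply (excl2 g a b c).
        assert (a > 1).
        { destruct (Rlt_or_le 1 a) as [H|H]; auto. exfalso. apply (Hnr H x0). apply RE; auto. }
        exists x0. split; [apply RE; auto|]. split.
        { intros x Rx. apply U0. apply RE; auto. }
        split; [auto|].
        unfold DG in D0. split; [lra|]. right; auto.
      * apply (excl4 g a b c). split.
        { intros x Rx. apply (Nr x). apply RE; auto. }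
        nra.
    + apply (excl3 g a b c).
      destruct (A_pos g DG L HD HK H3) as [x0 [R0 [U0 [C0 D0]]]].
      { exact (farP cpos). }
      exists x0. split; [apply RE; auto|]. split.
      { intros x Rx. apply U0. apply RE. auto. }
      split; [auto|]. split; [unfold DG in D0; lra|]. nra.
Qed.
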